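(* Let $f:\mathbb{R}^n\to\mathbb{R}$ be differentiable with $L$-Lipschitz gradient $\nabla f$. Let $\mathcal{E}^t$ denote the event $\|\nabla f(x^t)\|_\infty\le\eta$. Then the iterate $x^{t+1}$ of Markov gradient descent (MGD) satisfies $$\mathbb{E}\left[f(x^{t+1})\,\middle|\,x^t,\mathcal{E}^t\right]\le f(x^t)+\frac{L\alpha^2}{2\eta}\|\nabla f(x^t)\|_1-\frac{\alpha}{\eta}\|\nabla f(x^t)\|_2^2 .$$
   Context: Markov gradient descent (MGD) with lattice resolution $\alpha>0$ and normalizer $\eta>0$: start at $x^0\in\alpha\mathbb{Z}^n$; at step $t$, for each coordinate $i$, conditionally on $x^t$, $\Delta^t_i\in\{0,1\}$ is Bernoulli with $\mathbb{P}[\Delta^t_i=1\mid x^t]=\min(|\partial_i f(x^t)|/\eta,1)$, and $x^{t+1}_i=x^t_i-\alpha\,\mathrm{sgn}(\partial_i f(x^t))\Delta^t_i$. (This is stochastic Markov gradient descent with the deterministic gradient estimator $G=\nabla f$.) *)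

(* Defs.v *)
From HB Require Import structures.
From mathcomp Require Import all_boot all_order all_algebra.
From mathcomp Require Import all_classical all_reals all_analysis.
Set Implicit Arguments. Unset Strict Implicit. Unset Printing Implicit Defensive.
Import Order.TTheory GRing.Theory Num.Theory.
Import numFieldNormedType.Exports.
Local Open Scope ring_scope.

(* Points of R^n are row vectors 'rV[R]_n; e_i = delta_mx 0 i. *)

Definition partial {R : realType} {n : nat} (f : 'rV[R]_n -> R) (i : 'I_n)
  (x : 'rV[R]_n) : R := 'D_(delta_mx 0 i) f x.

Definition grad {R : realType} {n : nat} (f : 'rV[R]_n -> R) (x : 'rV[R]_n)
  : 'rV[R]_n := \row_i partial f i x.

Definition norm1 {R : realType} {n : nat} (v : 'rV[R]_n) : R :=
  \sum_(i < n) `|v 0 i|.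
Definition norm2 {R : realType} {n : nat} (v : 'rV[R]_n) : R :=
  Num.sqrt (\sum_(i < n) v 0 i ^+ 2).
Definition norminf {R : realType} {n : nat} (v : 'rV[R]_n) : R :=
  \big[Num.max/0]_(i < n) `|v 0 i|.

Definition on_lattice {R : realType} {n : nat} (alpha : R) (x : 'rV[R]_n) : Prop :=
  forall i : 'I_n, exists z : int, x 0 i = z%:~R * alpha.

Definition mgd_prob {R : realType} {n : nat} (f : 'rV[R]_n -> R) (eta : R)
  (x : 'rV[R]_n) (i : 'I_n) : R :=
  Num.min (`|partial f i x| / eta) 1.

Definition mgd_step {R : realType} {n : nat} (f : 'rV[R]_n -> R) (alpha : R)
  (x : 'rV[R]_n) (Delta : {ffun 'I_n -> bool}) : 'rV[R]_n :=
  \row_i (x 0 i - alpha * Num.sg (partial f i x) * (Delta i)%:R).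

(* w is a conditional law (given x^t = x) of the coin vector Delta^t that is
   admissible for MGD: a probability distribution on {0,1}^n whose i-th marginal
   is Bernoulli(min(|d_i f(x)|/eta, 1)). *)
Definition mgd_coin_law {R : realType} {n : nat} (f : 'rV[R]_n -> R) (eta : R)
  (x : 'rV[R]_n) (w : {ffun 'I_n -> bool} -> R) : Prop :=
  (forall d : {ffun 'I_n -> bool}, 0 <= w d) /\ (\sum_(d : {ffun 'I_n -> bool}) w d = 1) /\
  (forall i : 'I_n, \sum_(d : {ffun 'I_n -> bool} | d i) w d = mgd_prob f eta x i).

(* Conditional expectation of f(x^{t+1}) given x^t = x, under law w of Delta^t *)
Definition mgd_cond_exp {R : realType} {n : nat} (f : 'rV[R]_n -> R) (alpha : R)
  (x : 'rV[R]_n) (w : {ffun 'I_n -> bool} -> R) : R :=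
  \sum_(d : {ffun 'I_n -> bool}) w d * f (mgd_step f alpha x d).

(* Main.v *)
Require Import Defs.
From HB Require Import structures.
From mathcomp Require Import all_boot all_order all_algebra.
From mathcomp Require Import all_classical all_reals all_analysis.
From mathcomp Require Import lra ring.
Import Order.TTheory GRing.Theory Num.Theory.
Import numFieldNormedType.Exports.
Local Open Scope ring_scope.

Lemma poly_is_derive (R : realType) (c k t : R) :
  is_derive t 1 (fun s : R => s * c + s ^+ 2 * k) (c + 2 * t * k).
Proof.
apply: is_derive_eq.
by rewrite !scaler0 !add0r /GRing.scale /=; ring.
Qed.

Section S.
Variables (R : realType) (n : nat).

Definition dot (a b : 'rV[R]_n) : R := \sum_(i < n) a 0 i * b 0 i.

Lemma norm2_ge0 (a : 'rV[R]_n) : 0 <= norm2 a.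
Proof. exact: sqrtr_ge0. Qed.

Lemma norm2_sq (a : 'rV[R]_n) : norm2 a ^+ 2 = \sum_(i < n) a 0 i ^+ 2.
Proof. by rewrite sqr_sqrtr // sumr_ge0 // => i _; exact: sqr_ge0. Qed.

Lemma norm2Z (t : R) (a : 'rV[R]_n) : 0 <= t -> norm2 (t *: a) = t * norm2 a.
Proof.
move=> t0; rewrite /norm2 (_ : \sum_(i < n) (t *: a) 0 i ^+ 2 = t ^+ 2 * \sum_(i < n) a 0 i ^+ 2).
  by rewrite sqrtrM ?sqr_ge0 // sqrtr_sqr ger0_norm.
rewrite mulr_sumr; apply: eq_bigr => i _; rewrite mxE; ring.
Qed.

Lemma dotBl (a b h : 'rV[R]_n) : dot (a - b) h = dot a h - dot b h.
Proof. rewrite /dot -sumrB; apply: eq_bigr => i _; rewrite !mxE; ring. Qed.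

Lemma norm2_eq0 (a : 'rV[R]_n) : norm2 a = 0 -> forall i, a 0 i = 0.
Proof.
move=> h0 i; have : \sum_(i < n) a 0 i ^+ 2 = 0 by rewrite -norm2_sq h0 expr0n.
move/psumr_eq0P => H; have := H (fun j _ => sqr_ge0 (a 0 j)) i isT.
by move/eqP; rewrite sqrf_eq0 => /eqP.
Qed.

Lemma cauchy_schwarz (a b : 'rV[R]_n) : dot a b <= norm2 a * norm2 b.
Proof.
have [A0|A0] := eqVneq (norm2 a) 0.
  rewrite A0 mul0r /dot big1 // => i _; by rewrite (@norm2_eq0 a A0) mul0r.
have [B0|B0] := eqVneq (norm2 b) 0.
  rewrite B0 mulr0 /dot big1 // => i _; by rewrite (@norm2_eq0 b B0) mulr0.
have Ap : 0 < norm2 a by rewrite lt_def A0 norm2_ge0.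
have Bp : 0 < norm2 b by rewrite lt_def B0 norm2_ge0.
set A := norm2 a in A0 Ap *; set B := norm2 b in B0 Bp *.
have H : \sum_(i < n) (2 * A * B) * (a 0 i * b 0 i) <=
         \sum_(i < n) (B ^+ 2 * a 0 i ^+ 2 + A ^+ 2 * b 0 i ^+ 2).
  apply: ler_sum => i _.
  have := sqr_ge0 (B * a 0 i - A * b 0 i); nra.
rewrite -mulr_sumr big_split /= -!mulr_sumr -!norm2_sq -/A -/B in H.
have AB : 0 < A * B by exact: mulr_gt0.
rewrite -/(dot a b) in H.
nra.
Qed.

Variables (f : 'rV[R]_n -> R).
Hypothesis hdiff : forall x : 'rV[R]_n, differentiable f x.

Lemma diff_dot z h : 'd f z h = dot (grad f z) h.
Proof.
rewrite {1}(row_sum_delta h) linear_sum /dot; apply: eq_bigr => i _.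
by rewrite linearZ /= mxE /partial deriveE // mulrC.
Qed.

Lemma derive_line x h t :
  derive (fun s : R => f (x + s *: h)) t 1 = 'D_h f (x + t *: h) /\
  derivable (fun s : R => f (x + s *: h)) t 1.
Proof.
have E : (fun s : R => s^-1 *: (((fun s : R => f (x + s *: h)) \o shift t) (s *: 1) - f (x + t *: h)))
  = (fun s : R => s^-1 *: ((f \o shift (x + t *: h)) (s *: h) - f (x + t *: h))).
  apply/funext => s /=; congr (_ *: (f _ - _)).
  rewrite scalerDl (_ : s%:A = s); last by rewrite /GRing.scale /= mulr1.
  by rewrite addrCA.
split; first by rewrite /derive E.
by rewrite /derivable E; apply: diff_derivable.
Qed.

Lemma descent (L : R)
  (hlip : forall x y : 'rV[R]_n, norm2 (grad f x - grad f y) <= L * norm2 (x - y))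
  x h : f (x + h) <= f x + dot (grad f x) h + L / 2 * norm2 h ^+ 2.
Proof.
set c := dot (grad f x) h; set k := L / 2 * norm2 h ^+ 2.
pose phi s := f (x + s *: h) - (s * c + s ^+ 2 * k).
have dphi t : derivable phi t 1 /\ derive1 phi t = 'D_h f (x + t *: h) - (c + 2 * t * k).
  have [dl1 dl2] := derive_line x h t.
  have P := @poly_is_derive R c k t.
  have E : phi = (fun s : R => f (x + s *: h)) - (fun s : R => s * c + s ^+ 2 * k) by [].
  rewrite E; split; first exact: derivableB.
  by rewrite derive1E deriveB // dl1 derive_val.
have : phi 1 <= phi 0.
  apply: (@ler0_derive1_le_cc _ phi 0 1).
  - by move=> t _; exact: (dphi t).1.
  - move=> t; rewrite in_itv /= => /andP[t0 t1].
    rewrite (dphi t).2 deriveE // diff_dot.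
    have H1 := cauchy_schwarz (grad f (x + t *: h) - grad f x) h.
    have H2 := hlip (x + t *: h) x.
    rewrite (_ : x + t *: h - x = t *: h) in H2; last by rewrite addrC addKr.
    rewrite norm2Z in H2; last exact: ltW.
    rewrite dotBl in H1.
    have hn := norm2_ge0 h.
    have H3 : norm2 (grad f (x + t *: h) - grad f x) * norm2 h <= L * (t * norm2 h) * norm2 h.
      by apply: ler_wpM2r.
    rewrite /k; rewrite -/c in H1; nra.
  - by apply: derivable_within_continuous => t _; exact: (dphi t).1.
  - by rewrite in_itv /= lexx ler01.
  - by rewrite in_itv /= lexx ler01.
  - exact: ler01.
rewrite /phi scale1r scale0r addr0 expr1n expr0n /= !mul1r !mul0r addr0 subr0.
rewrite -/k; lra.
Qed.
End S.

Lemma eqle (R : realType) (x y : R) : x = y -> x <= y.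
Proof. by move->. Qed.

Theorem corollary6p1 (R : realType) (n : nat) (f : 'rV[R]_n -> R)
  (L alpha eta : R) (halpha : 0 < alpha) (heta : 0 < eta)
  (hdiff : forall x : 'rV[R]_n, differentiable f x)
  (hlip : forall x y : 'rV[R]_n, norm2 (grad f x - grad f y) <= L * norm2 (x - y))
  (x : 'rV[R]_n) (hx : on_lattice alpha x)
  (hE : norminf (grad f x) <= eta)
  (w : {ffun 'I_n -> bool} -> R) (hw : mgd_coin_law f eta x w) :
  mgd_cond_exp f alpha x w <=
    f x + L * alpha ^+ 2 / (2 * eta) * norm1 (grad f x)
        - alpha / eta * norm2 (grad f x) ^+ 2.
Proof.
case: hw => [w0 [w1 wi]].
set g := grad f x.
pose a i := - alpha * `|g 0 i| + L / 2 * (alpha ^+ 2 * Num.sg (g 0 i) ^+ 2).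
have pt d : f (mgd_step f alpha x d) <= f x + \sum_(i < n) a i * (d i)%:R.
  pose h : 'rV[R]_n := \row_i (- alpha * Num.sg (g 0 i) * (d i)%:R).
  have -> : mgd_step f alpha x d = x + h.
    rewrite /mgd_step /h; apply/rowP => i; rewrite !mxE /g. ring.
  apply: le_trans (@descent R n f hdiff L hlip x h) _.
  rewrite -addrA lerD2l norm2_sq mulr_sumr /dot -big_split /=.
  apply: eqle; apply: eq_bigr => i _; rewrite /a !mxE -/g.
  rewrite normrEsg.
  by case: (d i) => /=; ring.
have hp i : \sum_(d : {ffun 'I_n -> bool}) w d * (d i)%:R = `|g 0 i| / eta.
  rewrite -[RHS](@min_l _ _ _ 1).
    rewrite /g mxE -[Num.min _ _]wi [RHS]big_mkcond /=; apply: eq_bigr => d _.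
    by case: (d i); rewrite ?mulr1 ?mulr0.
  rewrite ler_pdivrMr // mul1r; apply: le_trans hE.
  exact: (le_bigmax _ (fun i => `|g 0 i|) i).
rewrite /mgd_cond_exp.
apply: le_trans (_ : \sum_d w d * (f x + \sum_(i < n) a i * (d i)%:R) <= _).
  by apply: ler_sum => d _; apply: ler_wpM2l.
under eq_bigr do rewrite mulrDr mulr_sumr.
rewrite big_split /= -mulr_suml w1 mul1r exchange_big /=.
under eq_bigr do under eq_bigr do rewrite mulrCA.
under eq_bigr do rewrite -mulr_sumr hp.
rewrite -addrA; apply: eqle; congr (_ + _).
rewrite /norm1 norm2_sq mulr_sumr mulr_sumr -sumrB; apply: eq_bigr => i _.
rewrite /a sqr_sg -(real_normK (num_real (g 0 i))).
have ne : eta != 0 by rewrite gt_eqF.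
case: (eqVneq (g 0 i) 0) => [->|gi0] /=; rewrite ?normr0.
  by rewrite mul0r; ring.
by field.
Qed.
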